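(* Let $\alpha$ be a unit-speed curve in $\mathbb{R}^3$ with nonvanishing curvature, let $\alpha_T$ be its tangent indicatrix with arc length $s_T$ and Frenet apparatus $\{T_T,N_T,B_T,\kappa_T,\tau_T\}$, and let $\beta$ be a Mannheim-direction curve of $\alpha_T$ (an $X$-direction curve of $\alpha_T$ with $N_\beta=B_T$). Then $$\frac{\tau_T}{\kappa_T}=\mp\,\frac{1}{\dfrac{\kappa_\beta^2}{(\kappa_\beta^2+\tau_\beta^2)^{3/2}}\,\dfrac{d}{ds_T}\Big(\dfrac{\tau_\beta}{\kappa_\beta}\Big)}.$$ That is, $\tau_T/\kappa_T$ equals this reciprocal up to sign.
   Context: Let $\alpha:I\subset\mathbb{R}\to\mathbb{R}^3$ be a unit-speed curve with curvature $\kappa>0$, torsion $\tau$ and Frenet frame $\{T,N,B\}$. The tangent indicatrix of $\alpha$ is the curve $\alpha_T=T$ on the unit sphere. Its arc length is $s_T=\int\kappa\,ds$. Its Frenet apparatus is $\{T_T,N_T,B_T,\kappa_T,\tau_T\}$, with $\frac{dT_T}{ds_T}=\kappa_TN_T$, $\frac{dN_T}{ds_T}=-\kappa_TT_T+\tau_TB_T$ and $\frac{dB_T}{ds_T}=-\tau_TN_T$. Let $x,y,z$ be real functions of $s_T$ with $x^2+y^2+z^2=1$, and set $X=xT_T+yN_T+zB_T$. An integral curve $\beta$ of $X$, meaning $d\beta/ds_T=X$, is an $X$-direction curve of $\alpha_T$. It has unit speed with arc length $s_T$. It is regarded as a Frenet curve with frame $\{T_\beta=X,N_\beta,B_\beta\}$,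 curvature $\kappa_\beta>0$ and torsion $\tau_\beta$. $\beta$ is a Mannheim-direction curve of $\alpha_T$ if $N_\beta=B_T$. *)

(* Defs.v *)
From Stdlib Require Import Reals.
From Coquelicot Require Import Coquelicot.
Open Scope R_scope.

(* Euclidean 3-space as triples (a NormedModule in Coquelicot via products). *)
Definition R3 : Type := (R * R * R)%type.

Definition vec (a b c : R) : R3 := (a, b, c).
Definition vx (u : R3) : R := fst (fst u).
Definition vy (u : R3) : R := snd (fst u).
Definition vz (u : R3) : R := snd u.

Definition vadd (u v : R3) : R3 := vec (vx u + vx v) (vy u + vy v) (vz u + vz v).
Definition vscale (k : R) (u : R3) : R3 := vec (k * vx u) (k * vy u) (k * vz u).
Definition dot (u v : R3) : R := vx u * vx v + vy u * vy v + vz u * vz v.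
Definition norm3 (u : R3) : R := sqrt (dot u u).
Definition cross (u v : R3) : R3 :=
  vec (vy u * vz v - vz u * vy v)
      (vz u * vx v - vx u * vz v)
      (vx u * vy v - vy u * vx v).

Definition in_oint (a b : Rbar) (t : R) : Prop := Rbar_lt a t /\ Rbar_lt t b.

Definition frenet_apparatus (a b : Rbar) (c T N B : R -> R3) (k tau : R -> R)
  : Prop :=
  forall t, in_oint a b t ->
    is_derive c t (T t) /\
    is_derive T t (vscale (k t) (N t)) /\
    is_derive N t (vadd (vscale (- k t) (T t)) (vscale (tau t) (B t))) /\
    is_derive B t (vscale (- tau t) (N t)) /\
    dot (T t) (T t) = 1 /\ dot (N t) (N t) = 1 /\ dot (T t) (N t) = 0 /\
    B t = cross (T t) (N t) /\
    0 < k t.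

(* Main.v *)
Require Import Defs.
From Stdlib Require Import Reals Lra.
From Coquelicot Require Import Coquelicot.
Open Scope R_scope.

Lemma der_fst (U V : NormedModule R_AbsRing) (c : R -> U * V) t (v : U * V) :
  is_derive c t v -> is_derive (fun u => fst (c u)) t (fst v).
Proof.
  intros H. unfold is_derive in *.
  apply (filterdiff_comp' c (fun p : U * V => fst p) t _ (fun p => fst p) H).
  apply filterdiff_linear, is_linear_fst.
Qed.
Lemma der_snd (U V : NormedModule R_AbsRing) (c : R -> U * V) t (v : U * V) :
  is_derive c t v -> is_derive (fun u => snd (c u)) t (snd v).
Proof.
  intros H. unfold is_derive in *.
  apply (filterdiff_comp' c (fun p : U * V => snd p) t _ (fun p => snd p) H).
  apply filterdiff_linear, is_linear_snd.
Qed.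
Lemma der_mul (f g : R -> R) t a b : is_derive f t a -> is_derive g t b ->
  is_derive (fun u => f u * g u) t (a * g t + f t * b).
Proof. intros. apply (is_derive_mult f g t a b); auto. intros; apply Rmult_comm. Qed.
Lemma der_add (f g : R -> R) t a b : is_derive f t a -> is_derive g t b ->
  is_derive (fun u => f u + g u) t (a + b).
Proof. intros. apply (is_derive_plus f g t a b); auto. Qed.
Lemma der_dot (c d : R -> R3) t v w : is_derive c t v -> is_derive d t w ->
  is_derive (fun u => dot (c u) (d u)) t (dot v (d t) + dot (c t) w).
Proof.
  intros Hc Hd.
  assert (Hc1 := der_fst _ _ c t v Hc). assert (Hc2 := der_snd _ _ c t v Hc).
  assert (Hd1 := der_fst _ _ d t w Hd). assert (Hd2 := der_snd _ _ d t w Hd).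
  assert (Hc11 := der_fst _ _ _ t _ Hc1). assert (Hc12 := der_snd _ _ _ t _ Hc1).
  assert (Hd11 := der_fst _ _ _ t _ Hd1). assert (Hd12 := der_snd _ _ _ t _ Hd1).
  unfold dot, vx, vy, vz.
  eapply is_derive_ext. intros u. reflexivity.
  evar (l : R). replace (_ + _) with l.
  apply der_add. apply der_add. apply der_mul; eassumption. apply der_mul; eassumption.
  apply der_mul; eassumption.
  unfold l. simpl. ring.
Qed.

Ltac dv := repeat match goal with u : R3 |- _ => destruct u as [[? ?] ?] end;
  unfold dot, cross, vadd, vscale, vec, vx, vy, vz; simpl; ring.

Lemma dot_comm u v : dot u v = dot v u. Proof. dv. Qed.
Lemma dot_scal_l k u v : dot (vscale k u) v = k * dot u v. Proof. dv. Qed.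
Lemma dot_scal_r k u v : dot u (vscale k v) = k * dot u v. Proof. dv. Qed.
Lemma dot_add_l u w v : dot (vadd u w) v = dot u v + dot w v. Proof. dv. Qed.
Lemma dot_add_r u w v : dot v (vadd u w) = dot v u + dot v w. Proof. dv. Qed.
Lemma dot_cross_l P Q : dot P (cross P Q) = 0. Proof. dv. Qed.
Lemma dot_cross_r P Q : dot Q (cross P Q) = 0. Proof. dv. Qed.
Lemma dot_cross_cross P Q : dot (cross P Q) (cross P Q) = dot P P * dot Q Q - dot P Q ^ 2.
Proof. dv. Qed.
Lemma triple A P Q : dot (cross A (cross P Q)) Q = dot P Q * dot A Q - dot Q Q * dot A P.
Proof. dv. Qed.

Lemma loc_oint a b t : in_oint a b t -> locally t (in_oint a b).
Proof.
  intros H. apply (open_and _ _ (open_Rbar_gt a) (open_Rbar_lt b) t H).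
Qed.

Lemma der_zero g t l : locally t (fun u => g u = 0) -> is_derive g t l -> l = 0.
Proof.
  intros Hl Hd.
  assert (H2 : is_derive (fun _ : R => 0) t l) by (eapply is_derive_ext_loc; eauto).
  assert (H3 : is_derive (fun _ : R => 0) t 0) by apply (is_derive_const 0).
  apply is_derive_unique in H2. apply is_derive_unique in H3. congruence.
Qed.
Theorem corollary6p4
  (* alpha : I -> R^3, I = ]a0,b0[, unit speed, tangent T = alpha',
     T' = dT, curvature kappa = |T'| > 0 *)
  (a0 b0 : Rbar) (alpha T dT : R -> R3)
  (Halpha : forall s, in_oint a0 b0 s ->
     is_derive alpha s (T s) /\ norm3 (T s) = 1 /\
     is_derive T s (dT s) /\ 0 < norm3 (dT s))
  (* arc length s_T = \int kappa ds of the tangent indicatrix, a bijection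
     from I onto J = ]a1,b1[ with inverse phi *)
  (a1 b1 : Rbar) (sT phi : R -> R)
  (HsT : forall s, in_oint a0 b0 s ->
     is_derive sT s (norm3 (dT s)) /\ in_oint a1 b1 (sT s) /\ phi (sT s) = s)
  (Hphi : forall t, in_oint a1 b1 t -> in_oint a0 b0 (phi t) /\ sT (phi t) = t)
  (* Frenet apparatus of the tangent indicatrix alpha_T = T, parametrized
     by its arc length s_T *)
  (TT NT BT : R -> R3) (kT tauT : R -> R)
  (HT : frenet_apparatus a1 b1 (fun t => T (phi t)) TT NT BT kT tauT)
  (* X-direction curve beta of alpha_T *)
  (x y z : R -> R) (beta : R -> R3)
  (Hxyz : forall t, in_oint a1 b1 t -> x t ^ 2 + y t ^ 2 + z t ^ 2 = 1)
  (Nb Bb : R -> R3) (kb taub : R -> R)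
  (Hbeta : frenet_apparatus a1 b1 beta
     (fun t => vadd (vadd (vscale (x t) (TT t)) (vscale (y t) (NT t)))
                    (vscale (z t) (BT t)))
     Nb Bb kb taub)
  (* Mannheim-direction condition N_beta = B_T *)
  (HMann : forall t, in_oint a1 b1 t -> Nb t = BT t) :
  forall t, in_oint a1 b1 t ->
    let rhs := / (kb t ^ 2 / Rpower (kb t ^ 2 + taub t ^ 2) (3 / 2)
                  * Derive (fun u => taub u / kb u) t) in
    tauT t / kT t = rhs \/ tauT t / kT t = - rhs.
Proof.
  intros t Ht rhs. unfold rhs; clear rhs.
  set (Tb := fun t => vadd (vadd (vscale (x t) (TT t)) (vscale (y t) (NT t))) (vscale (z t) (BT t))).
  assert (PA : forall u, in_oint a1 b1 u ->
    z u = 0 /\ dot (Tb u) (TT u) = x u /\ dot (Tb u) (NT u) = y u /\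
    dot (Tb u) (BT u) = 0 /\ dot (TT u) (BT u) = 0 /\ dot (NT u) (BT u) = 0 /\
    dot (BT u) (BT u) = 1 /\ x u ^ 2 + y u ^ 2 = 1 /\
    dot (Bb u) (BT u) = 0 /\ dot (Bb u) (NT u) = - x u /\ dot (TT u) (NT u) = 0 /\
    dot (TT u) (TT u) = 1 /\ dot (NT u) (NT u) = 1).
  { intros u Hu.
    destruct (HT u Hu) as (_&_&_&_&h1&h2&h3&h4&_).
    destruct (Hbeta u Hu) as (_&_&_&_&g1&g2&g3&g4&_).
    rewrite HMann in g2, g3, g4 by exact Hu.
    fold (Tb u) in g1, g3, g4.
    assert (e1 : dot (TT u) (BT u) = 0) by (rewrite h4; apply dot_cross_l).
    assert (e2 : dot (NT u) (BT u) = 0) by (rewrite h4; apply dot_cross_r).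
    assert (e3 : dot (BT u) (BT u) = 1) by (rewrite h4, dot_cross_cross, h1, h2, h3; ring).
    assert (eX : forall V, dot (Tb u) V = x u * dot (TT u) V + y u * dot (NT u) V + z u * dot (BT u) V).
    { intros V. unfold Tb. rewrite !dot_add_l, !dot_scal_l. ring. }
    assert (ex : dot (Tb u) (TT u) = x u) by (rewrite eX, (dot_comm (NT u)), (dot_comm (BT u)), e1, h3, h1; ring).
    assert (ey : dot (Tb u) (NT u) = y u) by (rewrite eX, (dot_comm (BT u)), e2, h3, h2; ring).
    assert (ez : dot (Tb u) (BT u) = z u) by (rewrite eX, e1, e2, e3; ring).
    assert (z0 : z u = 0) by (rewrite <- ez; exact g3).
    assert (eBN : dot (Bb u) (NT u) = - x u).
    { rewrite g4, h4, triple, h3, h2, ex. ring. }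
    assert (eBB : dot (Bb u) (BT u) = 0) by (rewrite g4, dot_comm; apply dot_cross_r).
    pose proof (Hxyz u Hu) as hx. rewrite z0 in hx.
    repeat split; auto; lra. }
  assert (PB : forall u, in_oint a1 b1 u -> kb u = y u * tauT u /\ taub u = x u * tauT u).
  { intros u Hu.
    destruct (PA u Hu) as (z0&ex&ey&eTB&e1&e2&e3&hxy&eBB&eBN&h3&h1&h2).
    destruct (HT u Hu) as (_&_&_&dBT&_).
    destruct (Hbeta u Hu) as (_&dTb&_&dBb&_).
    rewrite HMann in dTb, dBb by exact Hu.
    split.
    - pose proof (der_dot _ _ u _ _ dTb dBT) as D.
      apply der_zero in D.
      + rewrite dot_scal_l, dot_scal_r, e3 in D. fold (Tb u) in D. rewrite ey in D. lra.
      + apply (filter_imp (in_oint a1 b1)); [|apply loc_oint; auto].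
        intros v Hv. destruct (PA v Hv) as (_&_&_&h&_). exact h.
    - pose proof (der_dot _ _ u _ _ dBb dBT) as D.
      apply der_zero in D.
      + rewrite dot_scal_l, dot_scal_r, e3, eBN in D. lra.
      + apply (filter_imp (in_oint a1 b1)); [|apply loc_oint; auto].
        intros v Hv. destruct (PA v Hv) as (_&_&_&_&_&_&_&_&h&_). exact h. }
  destruct (PA t Ht) as (z0&ex&ey&eTB&e1&e2&e3&hxy&eBB&eBN&h3&h1&h2).
  destruct (PB t Ht) as [ek et].
  destruct (HT t Ht) as (_&dTT&dNT&_&_&_&_&_&kpos).
  destruct (Hbeta t Ht) as (_&dTb&_&_&_&_&_&_&kbpos).
  rewrite HMann in dTb by exact Ht.
  assert (Dx : is_derive x t (kT t * y t)).
  { pose proof (der_dot _ _ t _ _ dTb dTT) as D.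
    eapply is_derive_ext_loc; [|].
    2: { evar (l : R). replace (kT t * y t) with l. exact D. unfold l.
         rewrite dot_scal_l, dot_scal_r, (dot_comm (BT t)), e1. fold (Tb t). rewrite ey. ring. }
    apply (filter_imp (in_oint a1 b1)); [|apply loc_oint; auto].
    intros v Hv. destruct (PA v Hv) as (_&h&_). exact h. }
  assert (Dy : is_derive y t (- kT t * x t)).
  { pose proof (der_dot _ _ t _ _ dTb dNT) as D.
    eapply is_derive_ext_loc; [|].
    2: { evar (l : R). replace (- kT t * x t) with l. exact D. unfold l.
         rewrite dot_scal_l, dot_add_r, !dot_scal_r, (dot_comm (BT t)), e2.
         fold (Tb t). rewrite ex, eTB. ring. }
    apply (filter_imp (in_oint a1 b1)); [|apply loc_oint; auto].
    intros v Hv. destruct (PA v Hv) as (_&_&h&_). exact h. }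
  assert (yn : y t <> 0) by (intro h; rewrite h in ek; lra).
  assert (Df : is_derive (fun u => taub u / kb u) t (kT t / y t ^ 2)).
  { eapply is_derive_ext_loc.
    2: { replace (kT t / y t ^ 2) with ((kT t * y t * y t - x t * (- kT t * x t)) / y t ^ 2).
         apply (is_derive_div x y t _ _ Dx Dy yn).
         transitivity (kT t * (x t ^ 2 + y t ^ 2) / y t ^ 2).
         field; auto. rewrite hxy; field; auto. }
    apply (filter_imp (in_oint a1 b1)); [|apply loc_oint; auto].
    intros v Hv. destruct (PB v Hv) as [k1 k2]. rewrite k1, k2. change (@eq R (x v / y v) (x v * tauT v / (y v * tauT v))). field.
    split; intro h; rewrite h in k1; destruct (Hbeta v Hv) as (_&_&_&_&_&_&_&_&kp); lra. }
  replace (Derive (fun u => taub u / kb u) t) with (kT t / y t ^ 2) by (symmetry; apply is_derive_unique; exact Df).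
  assert (tn : tauT t <> 0) by (intro h; rewrite h in ek; lra).
  assert (S : kb t ^ 2 + taub t ^ 2 = tauT t ^ 2) by (rewrite ek, et; nra).
  rewrite S.
  assert (tp : 0 < tauT t ^ 2) by (apply pow2_gt_0; auto).
  replace (3 / 2) with (1 + / 2) by field.
  rewrite Rpower_plus, Rpower_1, Rpower_sqrt by auto.
  replace (sqrt (tauT t ^ 2)) with (Rabs (tauT t)) by (rewrite <- sqrt_Rsqr_abs; unfold Rsqr; f_equal; ring).
  rewrite ek.
  destruct (Rle_lt_dec 0 (tauT t)) as [hp|hn].
  - left. rewrite Rabs_pos_eq by auto. field. repeat split; lra.
  - right. rewrite Rabs_left by auto. field. repeat split; lra.
Qed.
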